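(* Let $a,b,n,r$ be integers with $n\ge1$, $a,b\ge n$ and $1\le r\le n$. Let $J$ be a totally ordered finite set with a decomposition $J=J_1\sqcup J_2$, $|J_1|=a$, $|J_2|=b$. Then there is a family $\mathcal{F}$ of $r$-element subsets of $J$ with $|\mathcal{F}|=\binom nr$ such that: (1) for every $I\in\mathcal{F}$, $|I\cap J_1|=\lfloor r/2\rfloor$ (equivalently $|I\,\Delta\,J_1|\in\{a,a+1\}$); (2) for every field $K$, every $n$-dimensional $K$-vector space $W$, and every family $(w_i)_{i\in J}$ of elements of $W$ such that every $n$-element subfamily is a basis of $W$, the elements $w_I=w_{i_1}\wedge\cdots\wedge w_{i_r}$ ($I=\{i_1<\dots<i_r\}\in\mathcal{F}$) form a basis of $\bigwedge^rW$.
   Context: $I\,\Delta\,J_1$ denotes the symmetric difference $(I\cup J_1)\setminus(I\cap J_1)$. *)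

(* Defs.v *)
From HB Require Import structures.
From mathcomp Require Import all_boot all_order all_algebra.
Set Implicit Arguments. Unset Strict Implicit. Unset Printing Implicit Defensive.
Import GRing.Theory.
Local Open Scope ring_scope.

Definition minor (K : fieldType) (p d : nat) (A : 'M[K]_(p, d))
    (S : {set 'I_d}) : K :=
  match #|S| =P p with
  | ReflectT e => \det (colsub (fun k : 'I_p => enum_val (cast_ord (esym e) k)) A)
  | ReflectF _ => 0
  end.

(* Exterior algebra of W (dimension d := \dim W), modelled in
   coordinates w.r.t. the basis vbasis fullv of W:
   an element is a function {set 'I_d} -> K, coefficient of e_S
   (e_S = e_{s_1} /\ ... /\ e_{s_k}, s_1 < ... < s_k). *)
Definition ExtAlg (K : fieldType) (W : vectType K) :=
  {ffun {set 'I_(\dim (fullv : {vspace W}))} -> K^o}.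

Definition ext_basis_vec (K : fieldType) (W : vectType K)
    (S : {set 'I_(\dim (fullv : {vspace W}))}) : ExtAlg W :=
  [ffun T => (T == S)%:R].

Definition ExtPow (K : fieldType) (W : vectType K) (r : nat) : {vspace ExtAlg W} :=
  <<[seq ext_basis_vec T | T <- enum [set T : {set 'I_(\dim (fullv : {vspace W}))} | #|T| == r]]>>%VS.

Definition coords (K : fieldType) (W : vectType K) (w : W)
    : 'rV[K]_(\dim (fullv : {vspace W})) :=
  \row_i coord (vbasis fullv) i w.

(* w_I = w_{i_1} /\ ... /\ w_{i_k} for I = {i_1 < ... < i_k}: its
   coordinate on e_S is the minor on columns S of the matrix whose rows
   are the coordinates of w_{i_1}, ..., w_{i_k}. *)
Definition wedge (K : fieldType) (W : vectType K) (m : nat)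
    (w : 'I_m -> W) (I : {set 'I_m}) : ExtAlg W :=
  [ffun S => minor (\matrix_(k < #|I|) coords (w (enum_val k))) S].

(* Main.v *)
Require Import Defs.
From HB Require Import structures.
From mathcomp Require Import all_boot all_order all_algebra ring zify.
Set Implicit Arguments. Unset Strict Implicit. Unset Printing Implicit Defensive.
Import GRing.Theory.
Local Open Scope ring_scope.


Section Minors.
Variable K : fieldType.

Definition Pm n p q (g1 : 'I_p -> 'I_n) (g2 : 'I_q -> 'I_n) : 'M[K]_(p, q) :=
  \matrix_(i, j) (g1 i == g2 j)%:R.

Lemma colsub_Pm r n p q (g1 : 'I_p -> 'I_n) (g2 : 'I_q -> 'I_n) (A : 'M[K]_(r, n)) :
  injective g1 -> (forall j, exists i, g1 i = g2 j) ->
  colsub g2 A = colsub g1 A *m Pm g1 g2.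
Proof.
move=> ig1 hg; apply/matrixP=> x j; rewrite !mxE.
have [i0 hi0] := hg j.
rewrite (bigD1 i0) //= big1 ?addr0.
  by rewrite !mxE hi0 eqxx mulr1.
move=> i ni; rewrite !mxE -hi0 (inj_eq ig1) (negbTE ni) mulr0 //.
Qed.

Definition E_mx q n (g : 'I_q -> 'I_n) : 'M[K]_(q, n) := \matrix_(i, c) (g i == c)%:R.

Lemma colsub_E q n (g : 'I_q -> 'I_n) : injective g -> colsub g (E_mx g) = 1%:M.
Proof.
move=> ig; apply/matrixP=> i j; rewrite !mxE (inj_eq ig) //.
Qed.

Definition eps q n (g : 'I_q -> 'I_n) : K := minor (E_mx g) [set g i | i in 'I_q].

Lemma card_img q n (g : 'I_q -> 'I_n) : injective g -> #|[set g i | i in 'I_q]| = q.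
Proof. by move=> ig; rewrite card_imset // card_ord. Qed.

Lemma minor_size q n (A : 'M[K]_(q, n)) (S : {set 'I_n}) : #|S| != q -> minor A S = 0.
Proof. by rewrite /minor; case: eqP. Qed.

Lemma minor_colsub q n (g : 'I_q -> 'I_n) : injective g ->
  eps g != 0 /\ forall A : 'M[K]_(q, n), minor A [set g i | i in 'I_q] = eps g * \det (colsub g A).
Proof.
move=> ig; rewrite /eps /minor.
case: (#|[set g i | i in 'I_q]| =P q) => [e|]; last by rewrite card_img.
pose fS := fun k : 'I_q => (enum_val (cast_ord (esym e) k) : 'I_n).
change ((\det (colsub fS (E_mx g)) != 0) /\ forall A : 'M[K]_(q, n),
  \det (colsub fS A) = \det (colsub fS (E_mx g)) * \det (colsub g A)).
have ifS : injective fS.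
  move=> x y; rewrite /fS => /enum_val_inj; apply: cast_ord_inj.
have h1 : forall j, exists i, g i = fS j.
  move=> j; have := enum_valP (cast_ord (esym e) j).
  by case/imsetP=> i _ hi; exists i; rewrite /fS hi.
have h2 : forall j, exists i, fS i = g j.
  move=> j; have gj : g j \in [set g i | i in 'I_q] by apply: imset_f.
  exists (cast_ord e (enum_rank_in gj (g j))).
  by rewrite /fS cast_ordK enum_rankK_in.
have E1 (A : 'M[K]_(q, n)) : colsub fS A = colsub g A *m Pm g fS by apply: colsub_Pm.
have E2 (A : 'M[K]_(q, n)) : colsub g A = colsub fS A *m Pm fS g by apply: colsub_Pm.
have d1 : \det (colsub fS (E_mx g)) = \det (Pm g fS).
  by rewrite E1 colsub_E // mul1mx.
split.
  rewrite d1; apply/eqP => h.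
  have := E2 (E_mx g); rewrite E1 colsub_E // mul1mx => /(congr1 determinant).
  by rewrite det1 det_mulmx h mul0r => /eqP; rewrite oner_eq0.
by move=> A; rewrite d1 E1 det_mulmx mulrC.
Qed.

End Minors.


Section Rows.
Variable K : fieldType.

Lemma rowsub_Pm m n p q (f1 : 'I_p -> 'I_m) (f2 : 'I_q -> 'I_m) (B : 'M[K]_(m, n)) :
  injective f2 -> (forall i, exists j, f2 j = f1 i) ->
  rowsub f1 B = Pm K f1 f2 *m rowsub f2 B.
Proof.
move=> if2 hf; apply/matrixP=> i c; rewrite !mxE.
have [j0 hj0] := hf i.
rewrite (bigD1 j0) //= big1 ?addr0.
  by rewrite !mxE hj0 eqxx mul1r.
move=> j nj; rewrite !mxE -hj0 (inj_eq if2) eq_sym (negbTE nj) mul0r //.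
Qed.

Lemma minor_mull q n (P : 'M[K]_q) (B : 'M[K]_(q, n)) S :
  minor (P *m B) S = \det P * minor B S.
Proof.
rewrite /minor; case: eqP => [e|]; last by rewrite mulr0.
have -> : forall g : 'I_q -> 'I_n, colsub g (P *m B) = P *m colsub g B.
  by move=> g; apply/matrixP=> i j; rewrite !mxE; apply: eq_bigr => k _; rewrite !mxE.
by rewrite det_mulmx.
Qed.

Lemma rows_same m p q (f1 : 'I_p -> 'I_m) (f2 : 'I_q -> 'I_m) :
  injective f1 -> injective f2 ->
  [set f1 i | i in 'I_p] = [set f2 i | i in 'I_q] ->
  exists2 e : K, e != 0 & forall n (M : 'M[K]_(m, n)) S,
    minor (rowsub f1 M) S = e * minor (rowsub f2 M) S.
Proof.
move=> if1 if2 himg.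
have epq : p = q by rewrite -(card_img if1) -(card_img if2) himg.
subst q.
have h12 : forall i, exists j, f2 j = f1 i.
  move=> i; have : f1 i \in [set f2 i | i in 'I_p] by rewrite -himg imset_f.
  by case/imsetP=> j _ ->; exists j.
have h21 : forall i, exists j, f1 j = f2 i.
  move=> i; have : f2 i \in [set f1 i | i in 'I_p] by rewrite himg imset_f.
  by case/imsetP=> j _ ->; exists j.
exists (\det (Pm K f1 f2)).
  pose X : 'M[K]_(m, p) := \matrix_(x, j) (x == f1 j)%:R.
  have hX1 : rowsub f1 X = 1%:M by apply/matrixP=> i j; rewrite !mxE (inj_eq if1).
  have := rowsub_Pm X if2 h12; rewrite hX1 => /(congr1 determinant).
  rewrite det1 det_mulmx => h; apply/eqP => h0; move: h; rewrite h0 mul0r.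
  by move/eqP; rewrite oner_eq0.
by move=> n M S; rewrite (rowsub_Pm M if2 h12) minor_mull.
Qed.

Lemma enum_set (T : finType) (S : {set T}) p : #|S| = p ->
  exists g : 'I_p -> T, injective g /\ [set g i | i in 'I_p] = S.
Proof.
move=> e; exists (fun k => enum_val (cast_ord (esym e) k)); split.
  by move=> x y /enum_val_inj; apply: cast_ord_inj.
apply/setP=> x; apply/imsetP/idP.
  by case=> i _ ->; apply: enum_valP.
move=> xS; exists (cast_ord e (enum_rank_in xS x)) => //.
by rewrite cast_ordK enum_rankK_in.
Qed.

Definition rowsX m n (M : 'M[K]_(m, n)) (X : {set 'I_m}) : 'M[K]_(#|X|, n) :=
  rowsub (fun k : 'I_#|X| => enum_val k) M.

Definition pl m n (M : 'M[K]_(m, n)) (X : {set 'I_m}) (S : {set 'I_n}) : K :=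
  minor (rowsX M X) S.

Lemma pl_rows m q (X : {set 'I_m}) (f : 'I_q -> 'I_m) :
  injective f -> [set f i | i in 'I_q] = X ->
  exists2 e : K, e != 0 & forall n (M : 'M[K]_(m, n)) S,
    pl M X S = e * minor (rowsub f M) S.
Proof.
move=> iff himg; apply: rows_same => //.
  by move=> x y /enum_val_inj.
rewrite himg; apply/setP=> x; apply/imsetP/idP.
  by case=> i _ ->; apply: enum_valP.
by move=> xS; exists (enum_rank_in xS x) => //; rewrite enum_rankK_in.
Qed.

Lemma pl_size m n (M : 'M[K]_(m, n)) (X : {set 'I_m}) (S : {set 'I_n}) : #|S| != #|X| -> pl M X S = 0.
Proof. exact: minor_size. Qed.

Lemma pl_row0 m n (M : 'M[K]_(m, n)) (X : {set 'I_m}) (S : {set 'I_n}) j : j \in X -> (forall t, M j t = 0) ->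
  pl M X S = 0.
Proof.
move=> jX hj; rewrite /pl /minor; case: eqP => // e.
rewrite (expand_det_row _ (enum_rank_in jX j)) big1 // => c _.
by rewrite !mxE enum_rankK_in // hj mul0r.
Qed.

End Rows.


Section Schur.
Variable K : fieldType.

Lemma sum_delta n (i : 'I_n) (F : 'I_n -> K) : \sum_k (i == k)%:R * F k = F i.
Proof.
rewrite (bigD1 i) //= eqxx mul1r big1 ?addr0 // => k nk.
by rewrite eq_sym (negbTE nk) mul0r.
Qed.

Lemma schur1 p (N : 'M[K]_p.+1) : N 0 0 != 0 ->
  \det N = N 0 0 * \det (\matrix_(a, b) (N (lift 0 a) (lift 0 b)
                          - N (lift 0 a) 0 / N 0 0 * N 0 (lift 0 b))).
Proof.
move=> nz.
pose U : 'M[K]_p.+1 := \matrix_(i, j) ((i == j)%:R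
   - ((j == 0) && (i != 0))%:R * (N i 0 / N 0 0)).
have dU : \det U = 1.
  rewrite det_trig; last first.
    apply/is_trig_mxP=> i j lij; rewrite !mxE.
    have -> : (i == j) = false by apply/negbTE; rewrite neq_ltn lij.
    have -> : (j == 0) = false by apply/negbTE; rewrite -lt0n; apply: leq_ltn_trans lij.
    by rewrite mul0r subr0.
  by apply: big1 => i _; rewrite !mxE eqxx; case: (i == 0); rewrite /= mul0r subr0.
have NE : forall i c, (U *m N) i c = N i c - (i != 0)%:R * (N i 0 / N 0 0) * N 0 c.
  move=> i c; rewrite !mxE.
  under eq_bigr => k _ do rewrite !mxE mulrBl.
  rewrite sumrB sum_delta; congr (_ - _).
  rewrite (bigD1 0) //= big1 ?addr0 //.
  by move=> k nk; rewrite (negbTE nk) /= mul0r mul0r.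
rewrite -[\det N]mul1r -dU -det_mulmx.
rewrite (expand_det_col _ 0) big_ord_recl big1 ?addr0.
  rewrite (NE ord0 0) (_ : (ord0 != 0 :> 'I_p.+1) = false) // mul0r mul0r subr0.
  rewrite /cofactor expr0 mul1r; congr (_ * \det _).
  apply/matrixP=> a b; rewrite !mxE.
  have := NE (lift ord0 a) (lift 0 b); rewrite mxE => ->.
  by rewrite (_ : (lift ord0 a != 0) = true) ?mul1r // eq_sym; exact: neq_lift.
move=> a _; rewrite NE (_ : (lift ord0 a != 0) = true) ?mul1r; last by rewrite eq_sym; exact: neq_lift.
by rewrite divfK // subrr mul0r.
Qed.

End Schur.


Section Cons.
Variable T : finType.

Definition cons_fun p (y : T) (h : 'I_p -> T) (i : 'I_p.+1) : T :=
  if unlift ord0 i is Some a then h a else y.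

Lemma cons_fun0 p y (h : 'I_p -> T) : cons_fun y h ord0 = y.
Proof. by rewrite /cons_fun unlift_none. Qed.

Lemma cons_funS p y (h : 'I_p -> T) a : cons_fun y h (lift ord0 a) = h a.
Proof. by rewrite /cons_fun liftK. Qed.

Lemma cons_inj p y (h : 'I_p -> T) : injective h -> y \notin [set h a | a in 'I_p] ->
  injective (cons_fun y h).
Proof.
move=> ih ny x z; rewrite /cons_fun.
case: unliftP => [a ->|->]; case: unliftP => [b ->|->] //.
- by move/ih->.
- by move=> e; case/negP: ny; rewrite -e imset_f.
- by move=> e; case/negP: ny; rewrite e imset_f.
Qed.

Lemma cons_img p y (h : 'I_p -> T) :
  [set cons_fun y h i | i in 'I_p.+1] = y |: [set h a | a in 'I_p].
Proof.
apply/setP=> x; rewrite inE; apply/imsetP/orP.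
  case=> i _ ->; rewrite /cons_fun; case: unliftP => [a _|_].
    by right; rewrite imset_f.
  by left; rewrite set11.
case=> [/set1P ->|/imsetP [a _ ->]].
  by exists ord0 => //; rewrite cons_fun0.
by exists (lift ord0 a) => //; rewrite cons_funS.
Qed.

End Cons.

Section PlC.
Variable K : fieldType.

Definition Mp m n (M : 'M[K]_(m, n.+1)) (j : 'I_m) (k : 'I_n.+1) : 'M[K]_(m, n) :=
  \matrix_(i, t) (M i (lift k t) - M i k / M j k * M j (lift k t)).

Lemma card_liftS n (k : 'I_n.+1) (S : {set 'I_n}) :
  #|k |: [set lift k t | t in S]| = #|S|.+1.
Proof.
rewrite cardsU1 card_imset; last exact: lift_inj.
have -> : (k \in [set lift k t | t in S]) = false.
  by apply/negbTE/imsetP => -[t _ e]; have := neq_lift k t; rewrite -e eqxx.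
by [].
Qed.

Lemma schur_gen m n p (M : 'M[K]_(m, n.+1)) j k (f : 'I_p -> 'I_m) (g : 'I_p -> 'I_n) :
  M j k != 0 ->
  \det (colsub (cons_fun k (fun a => lift k (g a))) (rowsub (cons_fun j f) M))
  = M j k * \det (colsub g (rowsub f (Mp M j k))).
Proof.
move=> nz.
set D := colsub _ (rowsub _ M).
have D00 : D 0 0 = M j k.
  by rewrite !mxE (_ : (0 : 'I_p.+1) = ord0) // !cons_fun0.
rewrite schur1 D00 //.
congr (_ * \det _).
apply/matrixP=> a b; rewrite !mxE (_ : (0 : 'I_p.+1) = ord0) // !cons_fun0 !cons_funS.
by [].
Qed.

Definition rowsP m (j : 'I_m) p (X : {set 'I_m}) (rho : K) : Prop := j \notin X -> #|X| = p ->
  exists f : 'I_p -> 'I_m, [/\ injective f, [set f i | i in 'I_p] = X &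
    exists r1, exists r2, [/\ r1 != 0, r2 != 0, rho = r1 / r2,
      forall n (M : 'M[K]_(m, n)) T, pl M (j |: X) T = r1 * minor (rowsub (cons_fun j f) M) T &
      forall n (M : 'M[K]_(m, n)) T, pl M X T = r2 * minor (rowsub f M) T]].

Lemma plc_rows m (j : 'I_m) p : exists rho : {set 'I_m} -> K, forall X, rowsP j p X (rho X).
Proof.
apply: (@fin_all_exists _ _ (rowsP j p)) => X; rewrite /rowsP.
case: (boolP (j \in X)) => jX; first by exists 0.
case: (eqVneq #|X| p) => pX; last by exists 0 => _ /eqP; rewrite (negbTE pX).
have [fX [ifX imX]] := enum_set pX.
have jimg : j \notin [set fX a | a in 'I_p] by rewrite imX.
have [r1 nr1 hr1] := pl_rows K (cons_inj ifX jimg) (etrans (cons_img j fX) (congr1 _ imX)).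
have [r2 nr2 hr2] := pl_rows K ifX imX.
exists (r1 / r2) => _ _; exists fX; split => //; exists r1, r2; split => //.
Qed.

Definition colsP n (k : 'I_n.+1) p (S : {set 'I_n}) (sig : K) : Prop := #|S| = p ->
  exists g : 'I_p -> 'I_n, [/\ injective g, [set g i | i in 'I_p] = S &
    exists e1, exists e2, [/\ e1 != 0, e2 != 0, sig = e1 / e2,
      forall B : 'M[K]_(p.+1, n.+1), minor B (k |: [set lift k t | t in S]) =
         e1 * \det (colsub (cons_fun k (fun a => lift k (g a))) B) &
      forall B : 'M[K]_(p, n), minor B S = e2 * \det (colsub g B)]].

Lemma plc_cols n (k : 'I_n.+1) p : exists sig : {set 'I_n} -> K, forall S, colsP k p S (sig S).
Proof.
apply: (@fin_all_exists _ _ (colsP k p)) => S; rewrite /colsP.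
case: (eqVneq #|S| p) => pS; last by exists 0 => /eqP; rewrite (negbTE pS).
have [gS [igS imS]] := enum_set pS.
have kimg : k \notin [set lift k (gS a) | a in 'I_p].
  by apply/imsetP=> -[a _ e]; have := neq_lift k (gS a); rewrite -e eqxx.
have ilg : injective (fun a => lift k (gS a)) by move=> x y /lift_inj/igS.
have ig := cons_inj ilg kimg.
have img : [set cons_fun k (fun a => lift k (gS a)) i | i in 'I_p.+1] =
           k |: [set lift k t | t in S].
  by rewrite cons_img -imS -imset_comp.
have [ne1 he1] := minor_colsub K ig.
have [ne2 he2] := minor_colsub K igS.
exists (eps K (cons_fun k (fun a => lift k (gS a))) / eps K gS) => _.
exists gS; split => //.
exists (eps K (cons_fun k (fun a => lift k (gS a)))), (eps K gS); split => //.
  by move=> B; rewrite -img he1.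
by move=> B; rewrite -{1}imS he2.
Qed.

Lemma plc m n (M : 'M[K]_(m, n.+1)) j k p : M j k != 0 ->
  exists rho : {set 'I_m} -> K, exists sig : {set 'I_n} -> K,
  [/\ forall X : {set 'I_m}, j \notin X -> #|X| = p -> rho X != 0,
      forall S : {set 'I_n}, #|S| = p -> sig S != 0 &
      forall (X : {set 'I_m}) (S : {set 'I_n}), j \notin X -> #|X| = p ->
      pl M (j |: X) (k |: [set lift k t | t in S]) = rho X * sig S * M j k * pl (Mp M j k) X S].
Proof.
move=> nz.
have [rho hrho] := plc_rows j p.
have [sig hsig] := plc_cols k p.
exists rho, sig; split.
- move=> X jX pX; have [f [_ _ [r1 [r2 [nr1 nr2 -> _ _]]]]] := hrho X jX pX.
  by rewrite mulf_neq0 // invr_eq0.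
- move=> S pS; have [g [_ _ [e1 [e2 [ne1 ne2 -> _ _]]]]] := hsig S pS.
  by rewrite mulf_neq0 // invr_eq0.
move=> X S jX pX.
have [pS|pS] := eqVneq #|S| p; last first.
  rewrite pl_size; last by rewrite card_liftS cardsU1 jX pX eqSS.
  by rewrite pl_size ?mulr0 // pX.
have [f [_ _ [r1 [r2 [nr1 nr2 -> hr1 hr2]]]]] := hrho X jX pX.
have [g [_ _ [e1 [e2 [ne1 ne2 -> he1 he2]]]]] := hsig S pS.
rewrite hr1 hr2 he1 he2 schur_gen //.
field.
by rewrite nr2 ne2.
Qed.

End PlC.


Section R1.
Variable K : fieldType.

Lemma sum_deltaT (T : finType) (i : T) (F : T -> K) : \sum_k (i == k)%:R * F k = F i.
Proof.
rewrite (bigD1 i) //= eqxx mul1r big1 ?addr0 // => k nk.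
by rewrite eq_sym (negbTE nk) mul0r.
Qed.

Lemma R1 n (k : 'I_n.+1) (al : 'rV[K]_n) (S : {set 'I_n}) :
  exists coef : {set 'I_n.+1} -> K, forall q (A : 'M[K]_(q, n.+1)),
    minor (colsub (lift k) A - col k A *m al) S = \sum_T coef T * minor A T.
Proof.
have [gS [igS imS]] := enum_set (erefl #|S|).
set p := #|S| in gS igS imS *.
have kimg : k \notin [set lift k (gS a) | a in 'I_p].
  by apply/imsetP=> -[a _ e]; have := neq_lift k (gS a); rewrite -e eqxx.
have ilg : injective (fun a => lift k (gS a)) by move=> x y /lift_inj/igS.
pose G := cons_fun k (fun a => lift k (gS a)).
have iG : injective G := cons_inj ilg kimg.
pose h0 := fun c : 'I_p => G (lift ord0 c).
have ih0 : injective h0 by move=> x y /iG /lift_inj.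
pose h := fun (b : 'I_p) (c : 'I_p) => G (lift (lift ord0 b) c).
have ih : forall b, injective (h b) by move=> b x y /iG /lift_inj.
pose be := fun b : 'I_p => al 0 (gS b).
pose I0 := [set h0 i | i in 'I_p].
pose Ib := fun b => [set h b i | i in 'I_p].
exists (fun T => eps K gS * ((I0 == T)%:R / eps K h0 +
   \sum_b (Ib b == T)%:R * (be b * (-1) ^+ (lift ord0 b : nat) / eps K (h b)))).
move=> q A.
have -> : \sum_T eps K gS * ((I0 == T)%:R / eps K h0 +
   \sum_b (Ib b == T)%:R * (be b * (-1) ^+ (lift ord0 b : nat) / eps K (h b))) * minor A T
   = eps K gS * (minor A I0 / eps K h0 + \sum_b be b * (-1) ^+ (lift ord0 b : nat) / eps K (h b) * minor A (Ib b)).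
  under eq_bigr => T _ do rewrite -mulrA.
  rewrite -mulr_sumr; congr (_ * _).
  under eq_bigr => T _ do rewrite mulrDl mulr_suml.
  rewrite big_split /=; congr (_ + _).
    transitivity (\sum_T (I0 == T)%:R * (minor A T / eps K h0)); last exact: sum_deltaT.
    by apply: eq_bigr => T _; rewrite mulrAC mulrA.
  rewrite exchange_big /=; apply: eq_bigr => b _.
  transitivity (\sum_T (Ib b == T)%:R * (be b * (-1) ^+ (lift ord0 b : nat) / eps K (h b) * minor A T)); last exact: sum_deltaT.
  by apply: eq_bigr => T _; rewrite -mulrA.
have [pq|pq] := eqVneq q p; last first.
  rewrite minor_size; last by rewrite -/p eq_sym.
  rewrite /I0 minor_size ?card_img // 1?eq_sym // mul0r add0r big1 ?mulr0 // => b _.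
  by rewrite /Ib minor_size ?card_img ?mulr0 // eq_sym.
subst q.
rewrite -{1}imS (minor_colsub K igS).2; congr (_ * _).
have c1 (e x : K) : e != 0 -> e * x / e = x by move=> ne; rewrite mulrAC divff // mul1r.
have c2 (a e x : K) : e != 0 -> a / e * (e * x) = a * x by move=> ne; rewrite mulrA divfK.
rewrite /I0 (minor_colsub K ih0).2 c1 ?(minor_colsub K ih0).1 //.
under eq_bigr => b _ do rewrite /Ib (minor_colsub K (ih b)).2 c2 ?(minor_colsub K (ih b)).1 //.
pose N : 'M[K]_p.+1 := \matrix_(i, j) match unlift ord0 i with
   | Some a => A a (G j)
   | None => if unlift ord0 j is Some b then be b else 1 end.
have N00 : N 0 0 = 1 by rewrite mxE (_ : (0 : 'I_p.+1) = ord0) // unlift_none.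
have := @schur1 K p N; rewrite N00 oner_neq0 mul1r => /(_ isT).
set C := \matrix_(a, b) _.
have -> : C = colsub gS (colsub (lift k) A - col k A *m al).
  apply/matrixP=> a b; rewrite !mxE !liftK (_ : (0 : 'I_p.+1) = ord0) // unlift_none.
  rewrite /G cons_fun0 cons_funS divr1 big_ord1 !mxE /be; ring.
move=> <-.
rewrite (expand_det_row N ord0) big_ord_recl; congr (_ + _).
  rewrite /cofactor !mxE unlift_none expr0 mul1r mul1r; congr (\det _).
  by apply/matrixP=> a b; rewrite !mxE (liftK ord0 a).
apply: eq_big => // b _; rewrite /cofactor !mxE unlift_none (liftK ord0 b) add0n mulrA.
congr (_ * \det _).
by apply/matrixP=> a c; rewrite !mxE (liftK ord0 a).
Qed.

End R1.


Section Aux.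
Variable K : fieldType.

Lemma det_size0 q (A : 'M[K]_q) : q = 0%N -> \det A = 1.
Proof. by move=> e; subst q; rewrite det_mx00. Qed.

Lemma pl_set0 m n (M : 'M[K]_(m, n)) : pl M set0 set0 = 1.
Proof.
rewrite /pl /minor; case: eqP => [e|]; last by rewrite !cards0.
by apply: det_size0; rewrite cards0.
Qed.

Lemma Mp_row0 m n (M : 'M[K]_(m, n.+1)) j k : M j k != 0 -> forall t, Mp M j k j t = 0.
Proof. by move=> nz t; rewrite mxE divff // mul1r subrr. Qed.

Lemma pl_Mp m n (M : 'M[K]_(m, n.+1)) j k (S : {set 'I_n}) :
  exists coef : {set 'I_n.+1} -> K, forall Y,
    pl (Mp M j k) Y S = \sum_T coef T * pl M Y T.
Proof.
have [coef hc] := R1 k (\row_t (M j (lift k t) / M j k)) S.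
exists coef => Y; rewrite /pl -hc; congr minor.
apply/matrixP=> a t; rewrite !mxE big_ord1 !mxE; ring.
Qed.

End Aux.

Lemma subset_card (T : finType) (B : {set T}) p : (p <= #|B|)%N ->
  exists S : {set T}, S \subset B /\ #|S| = p.
Proof.
move=> pB; exists [set x in take p (enum B)]; split.
  by apply/subsetP=> x; rewrite inE => /mem_take; rewrite mem_enum.
rewrite cardsE (card_uniqP _); last by apply: take_uniq; apply: enum_uniq.
rewrite size_take -cardE; case: ltnP => // h; apply/eqP; rewrite eqn_leq h; exact: pB.
Qed.

Lemma setT_lift n (k : 'I_n.+1) : k |: [set lift k t | t in [set: 'I_n]] = setT.
Proof.
apply/setP=> x; rewrite !inE; case: (unliftP k x) => [t ->|->]; last by rewrite eqxx.
by rewrite imset_f ?orbT.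
Qed.


Definition GP (K : fieldType) m n (A : {set 'I_m}) (M : 'M[K]_(m, n)) :=
  forall S : {set 'I_m}, S \subset A -> #|S| = n -> pl M S setT != 0.

Definition Good m (J1 : {set 'I_m}) n r (A : {set 'I_m}) (F : {set {set 'I_m}}) :=
  #|F| = 'C(n, r) /\
  (forall X, X \in F -> [/\ X \subset A, #|X| = r & #|X :&: J1| = r./2]) /\
  (forall (K : fieldType) (M : 'M[K]_(m, n)), GP A M ->
     forall c : {set 'I_m} -> K,
       (forall S : {set 'I_n}, \sum_(X in F) c X * pl M X S = 0) ->
       forall X, X \in F -> c X = 0).

Lemma good_r0 m (J1 : {set 'I_m}) n A : Good J1 n 0 A [set set0].
Proof.
split; first by rewrite cards1 bin0.
split.
  by move=> X /set1P ->; rewrite sub0set cards0 set0I cards0.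
move=> K M _ c H X /set1P ->.
have := H set0; rewrite big_set1 pl_set0 mulr1 //.
Qed.

Lemma good_rn m (J1 : {set 'I_m}) n A : (n./2 <= #|A :&: J1|)%N -> (n - n./2 <= #|A :\: J1|)%N ->
  exists F, Good J1 n n A F.
Proof.
move=> h1 h2.
have hh : (n./2 <= n)%N by rewrite leq_half_double -addnn; lia.
have cU : (n./2 + (n - n./2))%N = n by rewrite subnKC.
have [B1 [sB1 cB1]] := subset_card h1.
have [B2 [sB2 cB2]] := subset_card h2.
have B1J : B1 \subset J1 by apply: subset_trans sB1 (subsetIr _ _).
have B2J : B2 :&: J1 = set0.
  apply/setP=> x; rewrite !inE; apply/negbTE; apply/andP=> -[xB xJ].
  by have := subsetP sB2 x xB; rewrite !inE xJ.
have dis : B1 :&: B2 = set0.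
  apply/setP=> x; rewrite !inE; apply/negbTE; apply/andP=> -[x1 x2].
  have : x \in B2 :&: J1 by rewrite inE x2 (subsetP B1J).
  by rewrite B2J inE.
exists [set B1 :|: B2]; split; first by rewrite cards1 binn.
split.
  move=> X /set1P ->; split.
  - by rewrite subUset (subset_trans sB1 (subsetIl _ _)) (subset_trans sB2 (subsetDl _ _)).
  - by rewrite cardsU dis cards0 subn0 cB1 cB2.
  - by rewrite setIUl B2J setU0 (setIidPl B1J) cB1.
move=> K M gp c H X /set1P ->.
have := H setT; rewrite big_set1 => /eqP; rewrite mulf_eq0 => /orP[/eqP //|].
rewrite (negbTE (gp _ _ _)) //.
  by rewrite subUset (subset_trans sB1 (subsetIl _ _)) (subset_trans sB2 (subsetDl _ _)).
by rewrite cardsU dis cards0 subn0 cB1 cB2.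
Qed.

Lemma sumU (K : fieldType) (T : finType) (A B : {set T}) (F : T -> K) : [disjoint A & B] ->
  \sum_(x in A :|: B) F x = \sum_(x in A) F x + \sum_(x in B) F x.
Proof. by move=> d; rewrite -bigU //; apply: eq_bigl => x; rewrite !inE. Qed.

Lemma card_U1I m (j : 'I_m) (Y B : {set 'I_m}) : j \notin Y ->
  #|(j |: Y) :&: B| = ((j \in B) + #|Y :&: B|)%N.
Proof.
move=> jY; case: (boolP (j \in B)) => jB.
  have -> : (j |: Y) :&: B = j |: (Y :&: B).
    by apply/setP=> x; rewrite !inE; case: eqP => //= ->; rewrite jB.
  by rewrite cardsU1 inE (negbTE jY).
suff -> : (j |: Y) :&: B = Y :&: B by [].
by apply/setP=> x; rewrite !inE; case: eqP => //= ->; rewrite (negbTE jB) !andbF.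
Qed.

Lemma good_step m (J1 : {set 'I_m}) n r (A : {set 'I_m}) :
  (forall r A, (r <= n)%N -> (n <= #|A :&: J1|)%N -> (n <= #|A :\: J1|)%N ->
     exists F, Good J1 n r A F) ->
  (r.+1 <= n)%N -> (n.+1 <= #|A :&: J1|)%N -> (n.+1 <= #|A :\: J1|)%N ->
  exists F, Good J1 n.+1 r.+1 A F.
Proof.
move=> IH hr h1 h2.
have [j [jA jJ]] : exists j, j \in A /\ (j \in J1) = ~~ odd r.+1.
  case: (boolP (odd r.+1)) => od.
  - have : (0 < #|A :\: J1|)%N by lia.
    rewrite card_gt0 => /set0Pn [j]; rewrite inE => /andP[jnJ jA'].
    by exists j; split => //; apply: negbTE.
  - have : (0 < #|A :&: J1|)%N by lia.
    by rewrite card_gt0 => /set0Pn [j]; rewrite inE => /andP[jA' jJ]; exists j.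
set A' := A :\ j.
have sA' : A' \subset A by apply: subsetDl.
have jA' : j \notin A' by rewrite !inE eqxx.
have c1 : (n <= #|A' :&: J1|)%N.
  have : A :&: J1 \subset j |: (A' :&: J1).
    by apply/subsetP => x; rewrite !inE; case: eqP.
  move/subset_leq_card; rewrite cardsU1; have := leq_b1 (j \notin A' :&: J1); lia.
have c2 : (n <= #|A' :\: J1|)%N.
  have : A :\: J1 \subset j |: (A' :\: J1).
    by apply/subsetP => x; rewrite !inE; case: eqP.
  move/subset_leq_card; rewrite cardsU1; have := leq_b1 (j \notin A' :\: J1); lia.
have [F1 [cF1 [pF1 iF1]]] := IH r A' (ltnW hr) c1 c2.
have [F2 [cF2 [pF2 iF2]]] := IH r.+1 A' hr c1 c2.
have jF1 : forall X, X \in F1 -> j \notin X.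
  by move=> X /pF1 [sX _ _]; apply: contra jA' => /(subsetP sX).
have jF2 : forall X, X \in F2 -> j \notin X.
  by move=> X /pF2 [sX _ _]; apply: contra jA' => /(subsetP sX).
have injF1 : {in F1 &, injective (fun X => j |: X)}.
  by move=> X Y XF YF e; rewrite -(setU1K (jF1 _ XF)) -(setU1K (jF1 _ YF)) /= e.
pose F1j := [set j |: X | X in F1].
have dis : [disjoint F1j & F2].
  rewrite -setI_eq0; apply/eqP/setP=> X; rewrite !inE; apply/negbTE/andP=> -[/imsetP [Y _ ->] /jF2].
  by rewrite setU11.
exists (F1j :|: F2); split.
  rewrite cardsU (_ : F1j :&: F2 = set0); last by apply/eqP; rewrite setI_eq0.
  by rewrite cards0 subn0 card_in_imset // cF1 cF2 binS addnC.
split.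
  move=> X /setUP [/imsetP [Y YF ->]|XF2].
    have [sY cY cYJ] := pF1 Y YF; split.
    - by rewrite subUset sub1set jA (subset_trans sY sA').
    - by rewrite cardsU1 (jF1 _ YF) cY.
    - by rewrite card_U1I ?jF1 // cYJ jJ oddS negbK -uphalf_half uphalfE.
  have [sX cX cXJ] := pF2 X XF2; split => //.
  exact: subset_trans sX sA'.
move=> K M gp c H.
have cA' : (n <= #|A'|)%N.
  by apply: leq_trans c1 _; apply: subset_leq_card; apply: subsetIl.
have [S0 [sS0 cS0]] := subset_card cA'.
have jS0 : j \notin S0 by apply: contra jA' => /(subsetP sS0).
have sjA : forall S : {set 'I_m}, S \subset A' -> j |: S \subset A.
  by move=> S sS; rewrite subUset sub1set jA (subset_trans sS sA').
have [k nz] : exists k, M j k != 0.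
  case: (boolP [exists k, M j k != 0]) => [/existsP //|/existsPn h].
  have := gp _ (sjA _ sS0); rewrite cardsU1 jS0 cS0 => /(_ erefl).
  by rewrite (pl_row0 _ (setU11 j S0)) ?eqxx // => t; apply/eqP; rewrite -[_ == _]negbK h.
set M' := Mp M j k.
have gp' : GP A' M'.
  move=> S sS cS.
  have jS : j \notin S by apply: contra jA' => /(subsetP sS).
  have [rho [sig [nrho nsig hpl]]] := plc n nz.
  have := gp _ (sjA _ sS); rewrite cardsU1 jS cS => /(_ erefl).
  rewrite -(setT_lift k) hpl //.
  by apply: contra_neq => ->; rewrite mulr0.
have c2z : forall X, X \in F2 -> c X = 0.
  apply: (iF2 K M' gp' c) => S'.
  have [coef hc] := pl_Mp M j k S'.
  have E : \sum_(X in F1j :|: F2) c X * pl M' X S' = 0.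
    under eq_bigr => X _ do rewrite hc mulr_sumr.
    rewrite exchange_big /=; apply: big1 => T _.
    rewrite (eq_bigr (fun X => coef T * (c X * pl M X T))); last by move=> X _; ring.
    by rewrite -mulr_sumr H mulr0.
  move: E; rewrite sumU // big1 ?add0r // => X /imsetP [Y _ ->].
  by rewrite (pl_row0 _ (setU11 j Y)) ?mulr0 //; apply: Mp_row0.
have [rho [sig [nrho nsig hpl]]] := plc r nz.
have c1z : forall Y, Y \in F1 -> c (j |: Y) * rho Y = 0.
  apply: (iF1 K M' gp' (fun Y => c (j |: Y) * rho Y)) => S'.
  case: (eqVneq #|S'| r) => pS; last first.
    apply: big1 => Y YF; have [_ cY _] := pF1 Y YF.
    by rewrite pl_size ?mulr0 // cY.
  have := H (k |: [set lift k t | t in S']).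
  rewrite sumU // [X in _ + X]big1 ?addr0; last by move=> X XF; rewrite c2z ?mul0r.
  rewrite big_imset //=.
  rewrite (eq_bigr (fun Y => sig S' * M j k * (c (j |: Y) * rho Y * pl M' Y S'))); last first.
    move=> Y YF; have [_ cY _] := pF1 Y YF; rewrite hpl ?jF1 //; ring.
  rewrite -mulr_sumr => /eqP; rewrite mulf_eq0 mulf_eq0 (negbTE (nsig _ pS)) (negbTE nz) /=.
  by move/eqP.
move=> X /setUP [/imsetP [Y YF ->]|]; last exact: c2z.
have := c1z Y YF => /eqP; rewrite mulf_eq0 => /orP [/eqP //|].
by have [_ cY _] := pF1 Y YF; rewrite (negbTE (nrho _ (jF1 _ YF) cY)).
Qed.

Lemma core m (J1 : {set 'I_m}) n : forall r A, (r <= n)%N -> (n <= #|A :&: J1|)%N ->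
  (n <= #|A :\: J1|)%N -> exists F, Good J1 n r A F.
Proof.
elim: n => [|n IH] r A hr h1 h2.
  by move: hr; rewrite leqn0 => /eqP ->; exists [set set0]; apply: good_r0.
case: r hr => [|r] hr; first by exists [set set0]; apply: good_r0.
case: (eqVneq r n) => [->|rn].
  apply: good_rn.
    apply: leq_trans h1; rewrite leq_half_double -addnn; lia.
  by apply: leq_trans h2; apply: leq_subr.
apply: good_step => //; lia.
Qed.


Lemma gp_of_basis (K : fieldType) (W : vectType K) m (w : 'I_m -> W) :
  (forall S : {set 'I_m}, #|S| = \dim (fullv : {vspace W}) ->
     basis_of fullv [seq w i | i <- enum S]) ->
  GP setT (\matrix_(i, c) coords (w i) 0 c).
Proof.
move=> hb S _ cS.
set d := \dim (fullv : {vspace W}) in cS hb *.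
set M := \matrix_(i, c) coords (w i) 0 c.
pose g := fun i : 'I_#|S| => cast_ord cS i.
have ig : injective g by move=> x y /cast_ord_inj.
have img : [set g i | i in 'I_#|S|] = setT.
  apply/setP=> x; rewrite inE; apply/imsetP; exists (cast_ord (esym cS) x) => //.
  by rewrite /g cast_ordKV.
have [ne he] := minor_colsub K ig.
rewrite /pl -img he mulf_eq0 negb_or ne /=.
apply/negP => /det0P [v nv hv].
have fr := basis_free (hb S cS).
have: free (map_tuple w (enum_tuple S)) by [].
move/freeP => /(_ (fun i => v 0 i)).
have hsum : \sum_(i < #|S|) v 0 i *: (map_tuple w (enum_tuple S))`_i = 0.
  have ex : forall i : 'I_#|S|, (map_tuple w (enum_tuple S))`_i = w (enum_val i).
    move=> i; have hi : (i < size (enum S))%N by rewrite -cardE ltn_ord.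
    by rewrite /= (nth_map (enum_val i)) // (set_nth_default (enum_default i)).
  under eq_bigr => i _ do rewrite ex.
  set u := \sum_(i < #|S|) _.
  rewrite (coord_vbasis (memvf u)); apply: big1 => c _.
  suff -> : coord (vbasis fullv) c u = 0 by rewrite scale0r.
  have := congr1 (fun A : 'M[K]_(1, #|S|) => A 0 (cast_ord (esym cS) c)) hv; rewrite !mxE /= => <-.
  rewrite /u linear_sum; apply: eq_bigr => i _; rewrite !mxE /g cast_ordKV linearZ //.
move=> /(_ hsum) h0; case/eqP: nv; apply/rowP => i; rewrite h0 mxE //.
Qed.

Unset Implicit Arguments. Set Strict Implicit. Set Printing Implicit Defensive.

Theorem lemma4p12 (a b n r : nat) (hn : (1 <= n)%N) (ha : (n <= a)%N)
    (hb : (n <= b)%N) (hr1 : (1 <= r)%N) (hrn : (r <= n)%N)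
    (J1 : {set 'I_(a + b)}) (hJ1 : #|J1| = a) :
  exists F : {set {set 'I_(a + b)}},
    #|F| = 'C(n, r) /\
    (forall X, X \in F -> #|X| = r /\ #|X :&: J1| = r./2) /\
    (forall (K : fieldType) (W : vectType K) (w : 'I_(a + b) -> W),
        \dim (fullv : {vspace W}) = n ->
        (forall S : {set 'I_(a + b)}, #|S| = n ->
            basis_of fullv [seq w i | i <- enum S]) ->
        basis_of (ExtPow W r) [seq wedge w X | X <- enum F]).
Proof.
have hc : #|setT :\: J1| = b.
  by rewrite setTD; have := cardsC J1; rewrite card_ord hJ1; lia.
have h1 : (n <= #|setT :&: J1|)%N by rewrite setTI hJ1.
have h2 : (n <= #|setT :\: J1|)%N by rewrite hc.
have [F [cF [pF iF]]] := core hrn h1 h2.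
exists F; split => //; split.
  by move=> X XF; have [_ ? ?] := pF X XF.
move=> K W w hdim hbasis.
subst n.
set d := \dim (fullv : {vspace W}) in cF iF hbasis *.
set M := \matrix_(i, c) coords (w i) 0 c.
have gp : GP setT M by apply: gp_of_basis.
have wE : forall X, wedge w X = [ffun S => pl M X S].
  move=> X; apply/ffunP => S; rewrite !ffunE /pl; congr minor.
  by apply/matrixP => i c; rewrite !mxE.
rewrite basisEfree; apply/and3P; split.
- suff: free (map_tuple (wedge w) (enum_tuple F)) by [].
  apply/freeP => k hk i.
  have ex : forall i : 'I_#|F|, (map_tuple (wedge w) (enum_tuple F))`_i = wedge w (enum_val i).
    move=> j; have hj : (j < size (enum F))%N by rewrite -cardE ltn_ord.
    by rewrite /= (nth_map (enum_val j)) // (set_nth_default (enum_default j)).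
  pose c := fun X => \sum_(j < #|F| | enum_val j == X) k j.
  have cE : forall j, c (enum_val j) = k j.
    by move=> j; rewrite /c (big_pred1 j) // => j'; rewrite /= (inj_eq enum_val_inj).
  rewrite -cE; apply: (iF K M gp c); last exact: enum_valP.
  move=> S; rewrite big_enum_val.
  transitivity ((\sum_(j < #|F|) k j *: (map_tuple (wedge w) (enum_tuple F))`_j) S); last by rewrite hk ffunE.
  rewrite sum_ffunE; apply: eq_bigr => j _; rewrite cE ex wE !ffunE //.
- apply/span_subvP => v /mapP [X XF ->]; rewrite mem_enum in XF.
  have [_ cX _] := pF X XF.
  rewrite /ExtPow.
  have -> : wedge w X = \sum_(T in [set T : {set 'I_d} | #|T| == r]) (wedge w X T) *: ext_basis_vec T.
    apply/ffunP=> S; rewrite sum_ffunE.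
    under eq_bigr => T _ do rewrite !ffunE.
    case: (eqVneq #|S| r) => hS.
      rewrite (bigD1 S) ?inE ?hS //= eqxx big1 ?addr0.
        by rewrite ffunE; exact: (esym (mulr1 _)).
      by move=> T /andP [_ nT]; rewrite eq_sym (negbTE nT); exact: (mulr0 _).
    rewrite big1; first by rewrite wE ffunE pl_size // cX.
    move=> T; rewrite inE => /eqP hT; have -> : (S == T) = false.
      by apply/negbTE; apply: contra hS => /eqP ->; rewrite hT.
    exact: (mulr0 _).
  apply: memv_suml => T TR; apply: memvZ; apply: memv_span; apply/mapP; exists T => //.
  by rewrite mem_enum.
- apply: leq_trans (dim_span _) _; rewrite !size_map -!cardE card_draws card_ord cF //.
Qed.
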